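(* Let $\tilde\sigma,\hat\sigma\in[0,1)$ and $(\tau,\theta)\in\mathcal R_{\tilde\sigma}$. Define $\varphi,\widehat\varphi,\widetilde\varphi,\overline\varphi:\mathbb{R}\to\mathbb{R}$ by $$\varphi(\sigma)=(1-\tau)(\sigma-1)+(1-\tau-\tilde\sigma)(\tau+\theta),\qquad \widehat\varphi(\sigma)=(1-\tau)[(1+\theta)\sigma-1+\tau]-\tilde\sigma(\tau+\theta),$$ $$\widetilde\varphi(\sigma)=\sigma-(1-\tau-\theta)^2-\tilde\sigma(\tau+\theta),\qquad \overline\varphi(\sigma)=[(1+\tau)\widehat\varphi(\sigma)-2\tau\varphi(\sigma)](1+\tau)\widetilde\varphi(\sigma)-(1-\theta)^2\varphi(\sigma)^2.$$ Then there exists $\sigma\in[\hat\sigma,1)$ such that $\varphi(\sigma)\ge0$, $\widehat\varphi(\sigma)\ge0$, $\widetilde\varphi(\sigma)>0$ and $\overline\varphi(\sigma)\ge0$.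
   Context: $\mathcal R_{\tilde\sigma}:=\{(\tau,\theta):\tau\in(-1,1-\tilde\sigma),\ \tau+\theta>0,\ (1-\tau^2)(2-\tau-\theta-\tilde\sigma)-(1-\theta)^2(1-\tau-\tilde\sigma)>0\}$. *)

(* Defs.v *)
From Stdlib Require Import Reals Lra.
Open Scope R_scope.

Definition region_R (st tau theta : R) : Prop :=
  -1 < tau /\ tau < 1 - st /\ tau + theta > 0 /\
  (1 - tau ^ 2) * (2 - tau - theta - st) - (1 - theta) ^ 2 * (1 - tau - st) > 0.

Definition phi (st tau theta s : R) : R :=
  (1 - tau) * (s - 1) + (1 - tau - st) * (tau + theta).

Definition phihat (st tau theta s : R) : R :=
  (1 - tau) * ((1 + theta) * s - 1 + tau) - st * (tau + theta).

Definition phitilde (st tau theta s : R) : R :=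
  s - (1 - tau - theta) ^ 2 - st * (tau + theta).

Definition phibar (st tau theta s : R) : R :=
  ((1 + tau) * phihat st tau theta s - 2 * tau * phi st tau theta s)
    * (1 + tau) * phitilde st tau theta s
  - (1 - theta) ^ 2 * (phi st tau theta s) ^ 2.

(* Main.v *)
Require Import Defs.
From Stdlib Require Import Reals Lra Psatz.
Open Scope R_scope.

Lemma near1 (f : R -> R) : continuity_pt f 1 -> f 1 > 0 ->
  exists d, d > 0 /\ forall x, 1 - d < x < 1 -> f x > 0.
Proof.
  intros Hc Hp.
  destruct (Hc (f 1) Hp) as [alp [Ha H]].
  exists alp; split; [lra|].
  intros x Hx.
  assert (Hd : R_dist (f x) (f 1) < f 1).
  { apply H. split. split; [exact I| lra].
    unfold R_dist; simpl; unfold R_dist. rewrite Rabs_left; lra. }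
  unfold R_dist in Hd. apply Rabs_def2 in Hd. lra.
Qed.

Theorem proposition2p6 (st sh tau theta : R) :
  0 <= st < 1 -> 0 <= sh < 1 -> region_R st tau theta ->
  exists s : R, sh <= s < 1 /\
    phi st tau theta s >= 0 /\ phihat st tau theta s >= 0 /\
    phitilde st tau theta s > 0 /\ phibar st tau theta s >= 0.
Proof.
  intros Hst Hsh [H1 [H2 [H3 H4]]].
  set (a := tau + theta) in *.
  set (c := 1 - tau - st).
  assert (Hc : c > 0) by (unfold c; lra).
  assert (Hk : 2 - a - st > 0).
  { assert (0 <= (1 - theta) ^ 2 * c) by (apply Rmult_le_pos; [apply pow2_ge_0|lra]).
    assert (1 - tau ^ 2 > 0) by nra.
    unfold a, c in *.
    destruct (Rle_or_lt (2 - (tau + theta) - st) 0) as [Hl|]; [|lra].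
    assert ((1 - tau ^ 2) * (2 - (tau + theta) - st) <= 0).
    { rewrite <- (Rmult_0_r (1 - tau ^ 2)). apply Rmult_le_compat_l; lra. }
    replace (2 - tau - theta - st) with (2 - (tau + theta) - st) in H4 by ring. lra. }
  assert (P1 : phi st tau theta 1 > 0).
  { unfold phi. replace ((1 - tau) * (1 - 1) + (1 - tau - st) * (tau + theta)) with (c * a) by (unfold a, c; ring).
    apply Rmult_lt_0_compat; lra. }
  assert (P2 : phihat st tau theta 1 > 0).
  { unfold phihat. replace ((1 - tau) * ((1 + theta) * 1 - 1 + tau) - st * (tau + theta)) with (c * a) by (unfold a, c; ring).
    apply Rmult_lt_0_compat; lra. }
  assert (P3 : phitilde st tau theta 1 > 0).
  { unfold phitilde. replace (1 - (1 - tau - theta) ^ 2 - st * (tau + theta)) with (a * (2 - a - st)) by (unfold a; ring).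
    apply Rmult_lt_0_compat; lra. }
  assert (P4 : phibar st tau theta 1 > 0).
  { unfold phibar, phi, phihat, phitilde.
    replace (((1 + tau) * ((1 - tau) * ((1 + theta) * 1 - 1 + tau) - st * (tau + theta)) -
    2 * tau * ((1 - tau) * (1 - 1) + (1 - tau - st) * (tau + theta))) * (1 + tau) *
   (1 - (1 - tau - theta) ^ 2 - st * (tau + theta)) -
   (1 - theta) ^ 2 * ((1 - tau) * (1 - 1) + (1 - tau - st) * (tau + theta)) ^ 2)
    with ((a * a * c) * ((1 - tau ^ 2) * (2 - tau - theta - st) - (1 - theta) ^ 2 * (1 - tau - st)))
    by (unfold a, c; ring).
    apply Rmult_lt_0_compat; [|lra].
    apply Rmult_lt_0_compat; [|lra]. apply Rmult_lt_0_compat; lra. }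
  destruct (near1 (phi st tau theta)) as [d1 [D1 E1]]; [unfold phi; reg| exact P1|].
  destruct (near1 (phihat st tau theta)) as [d2 [D2 E2]]; [unfold phihat; reg| exact P2|].
  destruct (near1 (phitilde st tau theta)) as [d3 [D3 E3]]; [unfold phitilde; reg| exact P3|].
  destruct (near1 (phibar st tau theta)) as [d4 [D4 E4]]; [unfold phibar, phi, phihat, phitilde; reg| exact P4|].
  set (m := Rmin (Rmin d1 d2) (Rmin d3 d4)).
  assert (Hm : m > 0) by (unfold m; repeat apply Rmin_glb_lt; lra).
  assert (Hm1 : m <= d1 /\ m <= d2 /\ m <= d3 /\ m <= d4).
  { unfold m. repeat split.
    - eapply Rle_trans; [apply Rmin_l|apply Rmin_l].
    - eapply Rle_trans; [apply Rmin_l|apply Rmin_r].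
    - eapply Rle_trans; [apply Rmin_r|apply Rmin_l].
    - eapply Rle_trans; [apply Rmin_r|apply Rmin_r]. }
  set (s := Rmax sh (1 - m / 2)).
  assert (Hs1 : sh <= s) by apply Rmax_l.
  assert (Hs2 : 1 - m / 2 <= s) by apply Rmax_l || apply Rmax_r.
  assert (Hs3 : s < 1) by (unfold s; apply Rmax_lub_lt; lra).
  exists s. split; [lra|].
  repeat split.
  - left; apply E1; lra.
  - left; apply E2; lra.
  - apply E3; lra.
  - left; apply E4; lra.
Qed.
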